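(* Let $A$ be an $m\times n$ polyomino. Then the diagram of $A$ is (the set of positions of) a Ferrers array $F$, and the ranked essential set of $A$ consists of the lower right corners of $F$, each with rank $0$. Furthermore, for nonnegative integral vectors $R,S$, a polyomino $A\in\mathcal{C}_{m,n}(R,S)$ is uniquely determined by its ranked essential set; that is, two polyominoes in $\mathcal{C}_{m,n}(R,S)$ with the same ranked essential set are equal.
   Context: A $(0,1)$-matrix is convex if in every row and every column the 1's occur consecutively. It is connected if it has no zero row and no zero column and every two 1's are joined by a path of 1's in which consecutive 1's are horizontally or vertically adjacent. A polyomino is a connected convex $(0,1)$-matrix. $\mathcal{C}_{m,n}(R,S)$ is the set of convex $m\times n$ $(0,1)$-matrices with row sum vector $R$ and column sum vector $S$. A Ferrers array $F(U)$ for a nonincreasing nonnegative integer vector $U=(u_1,\dots,u_m)$ is the set of positions $\{(i,j): 1\le j\le u_i\}$ (left-justified rows of lengths $u_i$); its lower right corners are the positions $(i,u_i)$ with $u_i>u_{i+1}$ (where $u_{m+1}=0$). The diagram of an $m\times n$ $(0,1)$-matrix $A$: for each 1 of $A$ at $(i,j)$ shade all positions $(i,j')$, $j'\ge j$, and $(i',j)$, $i'\ge i$; the diagram is the set of unshaded positions. The essential set is the set of positions $(i,j)$ of the diagram such that neither $(i+1,j)$ nor $(i,j+1)$ lies in the diagram; the ranked essential set consists of the triples $(i,j;r)$ with $(i,j)$ in the essential set and $r$ the number of 1's of $A$ in rows $1,\dots,i$ and columns $1,\dots,j$. *)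

(* Defs.v *)
(* Matrices are 'M[bool]_(m, n); rows/columns are 0-indexed. *)
From mathcomp Require Import all_boot all_order all_algebra.
Set Implicit Arguments. Unset Strict Implicit. Unset Printing Implicit Defensive.

Section Polyomino.
Variables (m n : nat).
Implicit Types (A : 'M[bool]_(m, n)).

Definition convex A : Prop :=
  (forall (i : 'I_m) (j1 j j2 : 'I_n),
      j1 <= j -> j <= j2 -> A i j1 -> A i j2 -> A i j) /\
  (forall (j : 'I_n) (i1 i i2 : 'I_m),
      i1 <= i -> i <= i2 -> A i1 j -> A i2 j -> A i j).

Definition adj1 A : rel ('I_m * 'I_n) := fun p q =>
  [&& A p.1 p.2, A q.1 q.2 &
    ((p.1 == q.1) && ((p.2.+1 == q.2 :> nat) || (q.2.+1 == p.2 :> nat)))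
    || ((p.2 == q.2) && ((p.1.+1 == q.1 :> nat) || (q.1.+1 == p.1 :> nat)))].

Definition connected A : Prop :=
  (forall i : 'I_m, exists j : 'I_n, A i j) /\
  (forall j : 'I_n, exists i : 'I_m, A i j) /\
  (forall p q : 'I_m * 'I_n, A p.1 p.2 -> A q.1 q.2 -> connect (adj1 A) p q).

Definition polyomino A : Prop := convex A /\ connected A.

Definition row_sum A (i : 'I_m) : nat := \sum_(j < n) (A i j : nat).
Definition col_sum A (j : 'I_n) : nat := \sum_(i < m) (A i j : nat).

Definition in_C A (R : 'I_m -> nat) (S : 'I_n -> nat) : Prop :=
  convex A /\ (forall i, row_sum A i = R i) /\ (forall j, col_sum A j = S j).

Definition in_diagram A (i j : nat) : bool :=
  match insub i : option 'I_m, insub j : option 'I_n with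
  | Some i', Some j' =>
      ~~ [exists k : 'I_n, (k <= j') && A i' k] &&
      ~~ [exists k : 'I_m, (k <= i') && A k j']
  | _, _ => false
  end.

Definition diagram A : {set 'I_m * 'I_n} :=
  [set p : 'I_m * 'I_n | in_diagram A p.1 p.2].

Definition essential A : {set 'I_m * 'I_n} :=
  [set p : 'I_m * 'I_n | [&& in_diagram A p.1 p.2, ~~ in_diagram A p.1.+1 p.2
            & ~~ in_diagram A p.1 p.2.+1]].

Definition rank_at A (i : 'I_m) (j : 'I_n) : nat :=
  \sum_(k < m | k <= i) \sum_(l < n | l <= j) (A k l : nat).

Definition ranked_essential A : pred ('I_m * 'I_n * nat) := fun t =>
  (t.1 \in essential A) && (t.2 == rank_at A t.1.1 t.1.2).

End Polyomino.

(* Ferrers array F(U) for U = (u_1,...,u_m) (a seq of length m, nonincreasing),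
   0-indexed: position (i,j) is in F(U) iff j < u_i. *)
Definition ferrers_vec (m n : nat) (U : seq nat) : Prop :=
  size U = m /\ sorted geq U /\ all (fun u => u <= n) U.

Definition in_ferrers (U : seq nat) (i j : nat) : bool := j < nth 0 U i.

(* lower right corners (i, u_i) with u_i > u_{i+1} (u_{m+1} = 0);
   0-indexed: column u_i - 1, i.e. j.+1 = u_i *)
Definition ferrers_corner (U : seq nat) (i j : nat) : bool :=
  (j.+1 == nth 0 U i) && (nth 0 U i.+1 < nth 0 U i).

(* Main.v *)
Require Import Defs.
From mathcomp Require Import all_boot all_order all_algebra.
From mathcomp Require Import zify.
Set Implicit Arguments. Unset Strict Implicit. Unset Printing Implicit Defensive.

Lemma find_prefix (P : pred nat) (n : nat) :
  (forall j l, l <= j -> P j -> P l) -> (forall j, P j -> j < n) ->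
  forall j, P j = (j < find (predC P) (iota 0 n)).
Proof.
move=> pc bd j; apply/idP/idP.
- move=> Pj; rewrite ltnNge; apply/negP => le.
  have jn := bd j Pj.
  have hs : has (predC P) (iota 0 n) by rewrite has_find size_iota; lia.
  have := nth_find 0 hs.
  rewrite nth_iota; last by move: hs; rewrite has_find size_iota.
  rewrite /= add0n => /negP; apply; exact: pc le Pj.
- move=> lt.
  have jn : j < n.
    by apply: leq_trans lt _; have := find_size (predC P) (iota 0 n); rewrite size_iota.
  have := before_find 0 lt.
  by rewrite nth_iota // add0n /= => /negbFE.
Qed.

Lemma sorted_mkseq (f : nat -> nat) k :
  (forall i, f i.+1 <= f i) -> sorted geq (mkseq f k).
Proof.
move=> H; rewrite /mkseq; case: k => [|k] //=.
elim: k 0 => [|k IH] s //=.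
apply/andP; split; [exact: H | exact: IH].
Qed.

Lemma seqL k (g f : 'I_k -> bool) (j : 'I_k) :
  (forall j1 j0 j2 : 'I_k, j1 <= j0 -> j0 <= j2 -> g j1 -> g j2 -> g j0) ->
  \sum_(x < k) (f x : nat) = \sum_(x < k) (g x : nat) ->
  f j -> ~~ g j -> (forall l : 'I_k, l < j -> f l = g l) ->
  (exists2 l : 'I_k, l < j & g l) -> False.
Proof.
move=> cg E fj gj agree [l lj gl].
have g0 : forall x : 'I_k, ~~ (x < j) -> g x = false.
  move=> x; rewrite -leqNgt => jx; apply/negbTE/negP => gx.
  by move: gj; rewrite (cg l j x) // ltnW.
move: E; rewrite (bigID (fun x : 'I_k => x < j)) [in RHS](bigID (fun x : 'I_k => x < j)) /=.
rewrite [X in _ + X = _](bigD1 j) /=; last by rewrite ltnn.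
rewrite [X in _ = _ + X]big1; last by move=> x /g0 ->.
rewrite (eq_bigr (fun x : 'I_k => (g x : nat))); last by move=> x /agree ->.
rewrite fj; lia.
Qed.

Section S.
Variables m n : nat.
Implicit Types A B : 'M[bool]_(m, n).

Lemma quad_path A (i j : nat) :
  (forall (k : 'I_m) (l : 'I_n), k = i :> nat -> l <= j -> A k l = false) ->
  (forall (k : 'I_m) (l : 'I_n), k <= i -> l = j :> nat -> A k l = false) ->
  forall (s : seq ('I_m * 'I_n)) (p : 'I_m * 'I_n), path (Defs.adj1 A) p s -> p.1 <= i -> p.2 <= j ->
    ((last p s).1 <= i) && ((last p s).2 <= j).
Proof.
move=> rc cc; elim=> [|q s IH] p /=; first by move=> _ -> ->.
case/andP=> pq ps pi pj; apply: IH ps _ _.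
- move: pq; rewrite /Defs.adj1 => /and3P[Ap Aq /orP[/andP[/eqP e _]|/andP[/eqP e /orP[/eqP e2|/eqP e2]]]].
  + by rewrite -e.
  + have : p.1 != i :> nat by apply/eqP => E; move: Ap; rewrite rc.
    lia.
  + lia.
- move: pq; rewrite /Defs.adj1 => /and3P[Ap Aq /orP[/andP[/eqP e /orP[/eqP e2|/eqP e2]]|/andP[/eqP e _]]].
  + have : p.2 != j :> nat by apply/eqP => E; move: Ap; rewrite cc.
    lia.
  + lia.
  + by rewrite -e.
Qed.

Lemma overlap_path A (r : nat) :
  forall (s : seq ('I_m * 'I_n)) (p : 'I_m * 'I_n), path (Defs.adj1 A) p s -> p.1 <= r -> r < (last p s).1 ->
  exists l : 'I_n, exists k1 k2 : 'I_m,
    [/\ k1 = r :> nat, k2 = r.+1 :> nat, A k1 l & A k2 l].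
Proof.
elim=> [|q s IH] p /=; first by lia.
case/andP=> pq ps pr lr.
case: (leqP q.1 r) => qr; first exact: IH ps qr lr.
move: pq; rewrite /Defs.adj1 => /and3P[Ap Aq /orP[/andP[/eqP e _]|/andP[/eqP e /orP[/eqP e2|/eqP e2]]]].
- by move: qr; rewrite -e; lia.
- exists p.2, p.1, q.1; rewrite {2}e; split => //; lia.
- lia.
Qed.

Lemma overlap A : connected A -> forall (r1 r2 : 'I_m), r2 = r1.+1 :> nat ->
  exists l : 'I_n, A r1 l && A r2 l.
Proof.
case=> [hr [hc hp]] r1 r2 e.
have [c1 A1] := hr r1; have [c2 A2] := hr r2.
case/connectP: (hp (r1, c1) (r2, c2) A1 A2) => s pth lst.
have [|l [k1 [k2 [e1 e2 Ak1 Ak2]]]] := overlap_path pth (leqnn r1).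
  by rewrite -lst /= e.
exists l; have -> : r1 = k1 by apply/val_inj.
have -> : r2 = k2 by apply/val_inj; rewrite /= e2 e.
by rewrite Ak1 Ak2.
Qed.

Lemma diagP A : connected A -> forall i j : nat, in_diagram A i j =
  [&& i < m, j < n & [forall k : 'I_m, forall l : 'I_n,
      ((k <= i) && (l <= j)) ==> ~~ A k l]].
Proof.
move=> cA i j; rewrite /in_diagram.
case: insubP => [i' Hi Ei|Hi]; last by rewrite (negbTE Hi).
case: insubP => [j' Hj Ej|Hj]; last by rewrite (negbTE Hj) andbF.
rewrite Hi Hj /= -Ei -Ej.
apply/idP/idP.
- case/andP => /existsPn R /existsPn C.
  apply/forallP => k; apply/forallP => l; apply/implyP => /andP[ki lj].
  apply/negP => Akl.
  case: cA => [hr [hc hp]].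
  have [c Ac] := hr i'.
  case/connectP: (hp (k, l) (i', c) Akl Ac) => s pth lst.
  have rc : forall (k0 : 'I_m) (l0 : 'I_n), k0 = i' :> nat -> l0 <= j' -> A k0 l0 = false.
    move=> k0 l0 /val_inj -> l0j; apply/negbTE; move: (R l0); by rewrite l0j.
  have cc : forall (k0 : 'I_m) (l0 : 'I_n), k0 <= i' -> l0 = j' :> nat -> A k0 l0 = false.
    move=> k0 l0 k0i /val_inj ->; apply/negbTE; move: (C k0); by rewrite k0i.
  have := quad_path rc cc pth ki lj.
  rewrite -lst /= => /andP[_ cj].
  by move: (R c); rewrite cj Ac.
- move=> H; apply/andP; split; apply/existsPn => x; apply/negP => /andP[xle Ax].
  + by move: (forallP (forallP H i') x); rewrite leqnn xle Ax.
  + by move: (forallP (forallP H x) j'); rewrite leqnn xle Ax.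
Qed.

Lemma diag_down A : connected A -> forall i j i' j',
  in_diagram A i j -> i' <= i -> j' <= j -> in_diagram A i' j'.
Proof.
move=> cA i j i' j'; rewrite !(diagP cA) => /and3P[im jn /forallP H] ii jj.
rewrite (leq_ltn_trans ii im) (leq_ltn_trans jj jn) /=.
apply/forallP=> k; apply/forallP=> x; apply/implyP=> /andP[ki xl].
by have := forallP (H k) x; rewrite (leq_trans ki ii) (leq_trans xl jj).
Qed.

Definition fU A (i : nat) := find (predC (in_diagram A i)) (iota 0 n).

Lemma diag_fU A : connected A -> forall i j, in_diagram A i j = (j < fU A i).
Proof.
move=> cA i; apply: find_prefix.
- move=> j l lj H; exact: (diag_down cA H (leqnn i) lj).
- by move=> j; rewrite diagP // => /and3P[].
Qed.

Lemma fU_mono A : connected A -> forall i, fU A i.+1 <= fU A i.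
Proof.
move=> cA i; rewrite leqNgt; apply/negP => lt.
have := diag_fU cA i.+1 (fU A i); rewrite lt => H.
have := diag_down cA H (leqnSn i) (leqnn _).
by rewrite (diag_fU cA) ltnn.
Qed.

Lemma fU_ge A : connected A -> forall i, m <= i -> fU A i = 0.
Proof.
move=> cA i im; have := diag_fU cA i 0.
rewrite (diagP cA) ltnNge im /= lt0n => /esym/negbFE/eqP //.
Qed.

Lemma fU_le A i : fU A i <= n.
Proof. by have := find_size (predC (in_diagram A i)) (iota 0 n); rewrite size_iota. Qed.

Lemma nthU A : connected A -> forall i, nth 0 (mkseq (fU A) m) i = fU A i.
Proof.
move=> cA i; case: (ltnP i m) => h; first by rewrite nth_mkseq.
by rewrite nth_default ?size_mkseq // fU_ge.
Qed.

Lemma ress A : connected A -> forall (i : 'I_m) (j : 'I_n) r,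
  ranked_essential A (i, j, r) =
  (r == 0) && ((j.+1 == fU A i) && (fU A i.+1 < fU A i)).
Proof.
move=> cA i j r; rewrite /ranked_essential /essential inE /= !(diag_fU cA).
have mono := fU_mono cA i.
have [Hess|Hn] := boolP [&& j < fU A i, ~~ (j < fU A i.+1) & ~~ (j.+1 < fU A i)].
- have r0 : rank_at A i j = 0.
    have Hd : in_diagram A i j by rewrite (diag_fU cA); case/and3P: Hess.
    move: Hd; rewrite (diagP cA) => /and3P[_ _ /forallP H].
    rewrite /rank_at big1 // => k ki; rewrite big1 // => l lj.
    by have := forallP (H k) l; rewrite ki lj /= => /negbTE ->.
  rewrite r0 andbC /=.
  have -> : (j.+1 == fU A i) && (fU A i.+1 < fU A i).
    move: Hess; rewrite -!leqNgt => /and3P[h1 h2 h3].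
    apply/andP; split; [apply/eqP|]; lia.
  by rewrite andbT.
- rewrite /=; symmetry; apply/negbTE; apply/negP => /andP[_ /andP[/eqP e lt]].
  apply: (negP Hn); rewrite -!leqNgt; apply/and3P; split; lia.
Qed.

Lemma part1 A : polyomino A ->
  exists U : seq nat,
       ferrers_vec m n U /\
       (forall p : 'I_m * 'I_n, (p \in diagram A) = in_ferrers U p.1 p.2) /\
       (forall (i : 'I_m) (j : 'I_n) (r : nat),
          ranked_essential A (i, j, r) = (r == 0) && ferrers_corner U i j).
Proof.
case=> _ cA; exists (mkseq (fU A) m); split; [|split].
- split; first by rewrite size_mkseq.
  split; first by apply: sorted_mkseq; exact: fU_mono.
  by apply/allP => u /mapP [i _ ->]; exact: fU_le.
- by move=> p; rewrite inE /in_ferrers nthU // diag_fU.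
- by move=> i j r; rewrite ress // /ferrers_corner !nthU.
Qed.

Lemma fU_eq A B : connected A -> connected B ->
  (forall (i : 'I_m) (j : 'I_n),
     (j.+1 == fU A i) && (fU A i.+1 < fU A i) =
     (j.+1 == fU B i) && (fU B i.+1 < fU B i)) ->
  forall i, fU A i = fU B i.
Proof.
move=> cA cB H.
suff: forall k i, m - i <= k -> fU A i = fU B i by move=> H' i; apply: (H' (m - i)).
elim=> [|k IH] i hi.
  have him : m <= i by lia.
  by rewrite !fU_ge.
case: (leqP m i) => him; first by rewrite !fU_ge.
have e1 := IH i.+1 ltac:(lia).
have mA := fU_mono cA i; have mB := fU_mono cB i.
have lA := fU_le A i; have lB := fU_le B i.
case: (ltnP (fU A i.+1) (fU A i)) => hA.
  have jn : (fU A i).-1 < n by lia.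
  have pos : 0 < fU A i by lia.
  move: (H (Ordinal him) (Ordinal jn)); rewrite /= prednK // eqxx hA /=.
  move=> /esym/andP[/eqP e _]; lia.
case: (ltnP (fU B i.+1) (fU B i)) => hB.
  have jn : (fU B i).-1 < n by lia.
  have pos : 0 < fU B i by lia.
  move: (H (Ordinal him) (Ordinal jn)); rewrite /= prednK // eqxx hB /=.
  move=> /andP[/eqP e _]; lia.
lia.
Qed.

Lemma core A B (R : 'I_m -> nat) (S : 'I_n -> nat) :
  polyomino A -> polyomino B -> in_C A R S -> in_C B R S ->
  (forall i j, in_diagram A i j = in_diagram B i j) ->
  forall (i : 'I_m) (j : 'I_n), A i j -> ~~ B i j ->
  (forall (k : 'I_m) (l : 'I_n), k * n + l < i * n + j -> A k l = B k l) -> False.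
Proof.
move=> [[rA cA] conA] [[rB cB] conB] [_ [RA SA]] [_ [RB SB]] D i j Aij Bij mn.
have step1 : forall l : 'I_n, l < j -> A i l = false.
  move=> l lj; apply/negbTE/negP => Ail.
  apply: (@seqL n (B i) (A i) j (rB i)) => //.
  - by have := RA i; have := RB i; rewrite /row_sum => -> ->.
  - move=> l0 l0j; apply: mn; lia.
  - exists l => //; rewrite -mn //; lia.
have step2 : forall k : 'I_m, k < i -> A k j = false.
  move=> k ki; apply/negbTE/negP => Akj.
  apply: (@seqL m (fun x => B x j) (fun x => A x j) i (cB j)) => //.
  - by have := SA j; have := SB j; rewrite /col_sum => -> ->.
  - move=> l0 l0i; apply: mn.
    have := leq_mul l0i (leqnn n); rewrite mulSn; have := ltn_ord j; lia.
  - exists k => //; rewrite -mn //.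
    have := leq_mul ki (leqnn n); rewrite mulSn; have := ltn_ord j; lia.
case: (boolP [exists k : 'I_m, exists x : 'I_n, (k < i) && (x <= j) && A k x]);
  last first.
  move=> /existsPn none.
  have HB : in_diagram B i j.
    rewrite (diagP conB) ltn_ord ltn_ord /=.
    apply/forallP => k; apply/forallP => l; apply/implyP => /andP[ki lj].
    case: (ltnP k i) => ki'.
      rewrite -mn; last first.
        have := leq_mul ki' (leqnn n); rewrite mulSn; have := ltn_ord l; lia.
      apply/negP => Akl; move/existsPn: (none k) => /(_ l); by rewrite ki' lj Akl.
    have ek : k = i by apply/val_inj; apply/eqP; rewrite eqn_leq ki ki'.
    subst k.
    case: (ltnP l j) => lj'.
      by rewrite -mn ?step1 //; lia.
    by have -> : l = j by apply/val_inj; apply/eqP; rewrite eqn_leq lj lj'.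
  have HA : ~~ in_diagram A i j.
    rewrite (diagP conA) negb_and; apply/orP; right; rewrite negb_and; apply/orP; right.
    apply/negP => /forallP H; have := forallP (H i) j; by rewrite !leqnn Aij.
  by move: HA; rewrite D HB.
move=> /existsP[k /existsP[x /andP[/andP[ki xj] Akx]]].
have xj' : x < j.
  rewrite ltn_neqAle xj andbT; apply/negP => /eqP e.
  have ex : x = j by apply/val_inj.
  by move: Akx; rewrite ex step2.
have ind : forall d, d + k <= i -> exists (r : 'I_m) (y : 'I_n),
    [/\ r = d + k :> nat, y < j & A r y].
  elim=> [|d IH] hd; first by exists k, x.
  have [r [y [er yj Ary]]] := IH ltac:(lia).
  have r2m : r.+1 < m by have := ltn_ord i; lia.
  have [l /andP[Arl Ar2l]] := overlap conA (r1 := r) (r2 := Ordinal r2m) erefl.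
  case: (ltnP l j) => lj.
    by exists (Ordinal r2m), l; split => //=; lia.
  have Arj : A r j by apply: (rA r y j l) => //; apply: ltnW.
  by move: Arj; rewrite step2 //; lia.
have [r [y [er yj Ary]]] := ind (i - k) ltac:(lia).
have eri : r = i by apply/val_inj; rewrite /= er; lia.
by move: Ary; rewrite eri step1.
Qed.

Lemma part2 A B (R : 'I_m -> nat) (S : 'I_n -> nat) :
  polyomino A -> polyomino B -> in_C A R S -> in_C B R S ->
  ranked_essential A =i ranked_essential B -> A = B.
Proof.
move=> pA pB iA iB E.
have cA := pA.2; have cB := pB.2.
have Hf : forall i, fU A i = fU B i.
  apply: fU_eq => // i j.
  have := E (i, j, 0); rewrite /in_mem /= !ress //.
have D : forall i j, in_diagram A i j = in_diagram B i j.
  by move=> i j; rewrite !diag_fU // Hf.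
apply/matrixP => i0 j0; apply/eqP/negPn/negP => ne0.
case: (@arg_minnP _ (i0, j0) (fun p : 'I_m * 'I_n => A p.1 p.2 != B p.1 p.2)
         (fun p => p.1 * n + p.2) ne0) => [[i j]] /= ne minp.
have mn : forall (k : 'I_m) (l : 'I_n), k * n + l < i * n + j -> A k l = B k l.
  move=> k l lt; apply/eqP/negPn/negP => nkl.
  by have := minp (k, l) nkl; rewrite /= leqNgt lt.
move: ne; case Aij : (A i j); case Bij : (B i j) => //= _.
  by apply: (core pA pB iA iB D (i := i) (j := j)) => //; rewrite Bij.
apply: (core pB pA iB iA (fun a b => esym (D a b)) (i := i) (j := j)) => //.
  by rewrite Aij.
by move=> k l lt; rewrite mn.
Qed.

End S.

Theorem mainTheorem2 :
  (forall (m n : nat) (A : 'M[bool]_(m, n)), polyomino A ->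
     exists U : seq nat,
       ferrers_vec m n U /\
       (forall p : 'I_m * 'I_n, (p \in diagram A) = in_ferrers U p.1 p.2) /\
       (forall (i : 'I_m) (j : 'I_n) (r : nat),
          ranked_essential A (i, j, r) = (r == 0) && ferrers_corner U i j)) /\
  (forall (m n : nat) (R : 'I_m -> nat) (S : 'I_n -> nat)
          (A B : 'M[bool]_(m, n)),
     polyomino A -> polyomino B -> in_C A R S -> in_C B R S ->
     ranked_essential A =i ranked_essential B -> A = B).
Proof.
split; [exact: part1 | move=> m n R S A B; exact: part2].
Qed.
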